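(* Let $\mathbf{x}\in\mathrm{Mat}_{m\times n}(\mathbb{C}^* )$ and $i\in[m-1]$. Then $s_i(\mathbf{x})=R_i(\mathbf{x})$, where $s_i(\mathbf{x})=e_i^{\varepsilon_i(\mathbf{x})/\varphi_i(\mathbf{x})}(\mathbf{x})=e_i^{\pi_{i+1}/\pi_i}(\mathbf{x})$.
   Context: Rows $\mathbf{x}_i=(x_i^1,\dots,x_i^n)$, $\pi_i=\prod_{j=1}^nx_i^j$. For $u,v\in(\mathbb{C}^* )^n$, $\sigma^j(u,v;c)=\sum_{r=1}^nc^{\mathbb{1}_{r\le j}}v^1\cdots v^{r-1}u^{r+1}\cdots u^n$, $\sigma(u,v)=\sigma^j(u,v;1)$. The basic $\mathrm{GL}_m$-geometric crystal structure on $m\times n$ matrices (the product $(X_m)^n$ over columns) has $\varepsilon_i(\mathbf{x})=\pi_{i+1}/\sigma(\mathbf{x}_i,\mathbf{x}_{i+1})$, $\varphi_i(\mathbf{x})=\pi_i/\sigma(\mathbf{x}_i,\mathbf{x}_{i+1})$, and $e_i^c$ fixes rows other than $i,i+1$ and replaces $x_i^j$ by $x_i^j\sigma^j/\sigma^{j-1}$ and $x_{i+1}^j$ by $x_{i+1}^j\sigma^{j-1}/\sigma^j$ with $\sigma^k=\sigma^k(\mathbf{x}_i,\mathbf{x}_{i+1};c)$. The geometric $R$-matrix is $R((x_1,\dots,x_n),(y_1,\dots,y_n))=((y_1',\dots,y_n'),(x_1',\dots,x_n'))$ with $y'_j=y_j\kappa_{j+1}/\kappa_j$, $x'_j=x_j\kappa_j/\kappa_{j+1}$,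 $\kappa_r=\sum_{k=0}^{n-1}y_r\cdots y_{r+k-1}x_{r+k+1}\cdots x_{r+n-1}$ (subscripts mod $n$); $R_i$ replaces rows $(\mathbf{x}_i,\mathbf{x}_{i+1})$ by $(\mathbf{x}'_{i+1},\mathbf{x}'_i)$, where $(\mathbf{x}'_{i+1},\mathbf{x}'_i)=R(\mathbf{x}_i,\mathbf{x}_{i+1})$. *)

(* Defs.v *)
(* The complex numbers are R[i] (mathcomp-real-closed's
   complex) for an arbitrary  R : realType  (MathComp-Analysis reals). *)
From HB Require Import structures.
From mathcomp Require Import all_boot all_order all_algebra.
From mathcomp Require Import complex reals.
Set Implicit Arguments. Unset Strict Implicit. Unset Printing Implicit Defensive.
Import Order.TTheory GRing.Theory Num.Theory.
Local Open Scope ring_scope.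

(* Indices are 0-based: row i of the paper is row i-1 here, column j of the
   paper is column j-1 here.  Rows of an m x n matrix are vectors 'I_n -> F. *)

Section GeomCrystal.
Variable F : fieldType.
Variable n : nat.

(* sigma^j(u,v;c) = sum_{r=1}^n c^{1_{r<=j}} v^1..v^{r-1} u^{r+1}..u^n,
   written 0-based: r ranges over 'I_n, the indicator is [r < j],
   v over indices k < r, u over indices r < k < n. *)
Definition sigmaj (u v : 'I_n -> F) (c : F) (j : nat) : F :=
  \sum_(r < n) (if (r < j)%N then c else 1) *
    ((\prod_(k < n | (k < r)%N) v k) * (\prod_(k < n | (r < k)%N) u k)).

Definition sigma (u v : 'I_n -> F) : F := sigmaj u v 1 0.

Definition modn_ord (a : nat) : 'I_n.+1 := inord (a %% n.+1).
End GeomCrystal.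

Section Matrices.
Variable F : fieldType.

Definition natv n (u : 'I_n -> F) (k : nat) : F :=
  if insub k is Some o then u o else 0.

Definition rowv m n (x : 'M[F]_(m, n)) (i : nat) : 'I_n -> F :=
  fun j => if insub i is Some a then x a j else 0.

Definition piRow m n (x : 'M[F]_(m, n)) (i : nat) : F := \prod_(j < n) rowv x i j.

Definition eps_i m n (x : 'M[F]_(m, n)) (i : nat) : F :=
  piRow x i.+1 / sigma (rowv x i) (rowv x i.+1).
Definition phi_i m n (x : 'M[F]_(m, n)) (i : nat) : F :=
  piRow x i / sigma (rowv x i) (rowv x i.+1).

(* e_i^c: rows other than i, i+1 fixed;
   x_i^j -> x_i^j sigma^j / sigma^{j-1},  x_{i+1}^j -> x_{i+1}^j sigma^{j-1}/sigma^j,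
   with paper column j = 0-based column j-1, sigma^k = sigma^k(x_i,x_{i+1};c). *)
Definition e_i m n (i : nat) (c : F) (x : 'M[F]_(m, n)) : 'M[F]_(m, n) :=
  \matrix_(a < m, b < n)
    let s k := sigmaj (rowv x i) (rowv x i.+1) c k in
    if (a == i :> nat) then x a b * s b.+1 / s b
    else if (a == i.+1 :> nat) then x a b * s b / s b.+1
    else x a b.

Definition s_i m n (i : nat) (x : 'M[F]_(m, n)) : 'M[F]_(m, n) :=
  e_i i (eps_i x i / phi_i x i) x.

Definition kappa n (x y : 'I_n -> F) (r : nat) : F :=
  \sum_(k < n)
    (\prod_(t < n | (t < k)%N) natv y ((r + t) %% n)) *
    (\prod_(t < n | (k < t)%N) natv x ((r + t) %% n)).

Definition Rmat_fst n (x y : 'I_n -> F) : 'I_n -> F :=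
  fun j => y j * kappa x y j.+1 / kappa x y j.
Definition Rmat_snd n (x y : 'I_n -> F) : 'I_n -> F :=
  fun j => x j * kappa x y j / kappa x y j.+1.

Definition R_i m n (i : nat) (x : 'M[F]_(m, n)) : 'M[F]_(m, n) :=
  \matrix_(a < m, b < n)
    if (a == i :> nat) then Rmat_fst (rowv x i) (rowv x i.+1) b
    else if (a == i.+1 :> nat) then Rmat_snd (rowv x i) (rowv x i.+1) b
    else x a b.
End Matrices.

(* Main.v *)
Require Import Defs.
From HB Require Import structures.
From mathcomp Require Import all_boot all_order all_algebra.
From mathcomp Require Import complex reals.
From mathcomp Require Import ring.
Import Order.TTheory GRing.Theory Num.Theory.
Local Open Scope ring_scope.

Section Aux.
Variable F : fieldType.

Lemma CLp n (f : nat -> F) k : (k <= n)%N ->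
  \prod_(t < n | (t < k)%N) f t = \prod_(0 <= t < k) f t.
Proof.
move=> kn; rewrite (big_nat_widen _ _ _ _ _ kn) big_mkord.
by apply: eq_bigl => t.
Qed.

Lemma CLs n (f : nat -> F) k : (k <= n)%N ->
  \sum_(t < n | (t < k)%N) f t = \sum_(0 <= t < k) f t.
Proof.
move=> kn; rewrite (big_nat_widen _ _ _ _ _ kn) big_mkord.
by apply: eq_bigl => t.
Qed.

Lemma CL2 n (f : nat -> F) k :
  \prod_(t < n | (k < t)%N) f t = \prod_(k.+1 <= t < n) f t.
Proof.
rewrite (big_nat_widenl _ _ _ _ _ (leq0n k.+1)) big_mkord.
by apply: eq_bigl => t.
Qed.

Variable N : nat.
Local Notation n := N.+1.

Lemma natv_ord (w : 'I_n -> F) (t : 'I_n) : natv w t = w t.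
Proof. by rewrite /natv valK. Qed.

Definition gw (w : 'I_n -> F) (s : nat) := natv w (s %% n).

Lemma period (w : 'I_n -> F) j :
  \prod_(0 <= t < n) gw w (j + t) = \prod_(k < n) w k.
Proof.
elim: j => [|j IH].
  rewrite big_mkord; apply: eq_bigr => t _.
  by rewrite /gw add0n modn_small // natv_ord.
rewrite -IH big_nat_recr // big_nat_recl //.
rewrite [RHS]mulrC; congr (_ * _).
  by apply: eq_bigr => t _; rewrite addSnnS.
by rewrite /gw addn0 addSnnS modnDr.
Qed.

Definition kap_term (u v : 'I_n -> F) (r k : nat) :=
  (\prod_(0 <= t < k) gw v (r + t)) * (\prod_(k.+1 <= t < n) gw u (r + t)).

Lemma kappaE (u v : 'I_n -> F) r : kappa u v r = \sum_(k < n) kap_term u v r k.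
Proof.
rewrite /kappa; apply: eq_bigr => k _.
by rewrite (@CLp _ (fun t => natv v ((r + t) %% n))) 1?ltnW // (@CL2 _ (fun t => natv u ((r + t) %% n))).
Qed.

Lemma kapK (u v : 'I_n -> F) j :
  gw v j * kappa u v j.+1 =
  gw u j * kappa u v j + \prod_(k < n) v k - \prod_(k < n) u k.
Proof.
rewrite !kappaE [in LHS]big_ord_recr [X in gw u j * X]big_ord_recl /= !mulrDr.
have e1 : gw v j * kap_term u v j.+1 N = \prod_(k < n) v k.
  rewrite /kap_term [X in _ * (_ * X)]big_geq // mulr1 -(period v j) big_nat_recl //.
  by rewrite addn0; congr (_ * _); apply: eq_bigr => t _; rewrite addSnnS.
have e2 : gw u j * kap_term u v j 0 = \prod_(k < n) u k.
  rewrite /kap_term [X in _ * (X * _)]big_geq // mul1r -(period u j) [RHS]big_nat_recl //.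
  by rewrite big_add1 addn0.
have e3 : \sum_(k < N) gw v j * kap_term u v j.+1 k =
          \sum_(k < N) gw u j * kap_term u v j (bump 0 k).
  apply: eq_bigr => k _; rewrite /kap_term /bump /= add1n.
  rewrite [X in _ = _ * (X * _)]big_nat_recl // addn0.
  rewrite [X in _ * (_ * X) = _](big_nat_recr _ _ _ (ltn_ord k)) /=.
  rewrite [X in _ = _ * (_ * X)]big_add1 /=.
  have -> : gw u (j.+1 + N) = gw u j by rewrite /gw addSnnS modnDr.
  have -> : \prod_(k.+1 <= i < N) gw u (j + i.+1) = \prod_(k.+1 <= i < N) gw u (j.+1 + i).
    by apply: eq_bigr => t _; rewrite addSnnS.
  have -> : \prod_(0 <= i < k) gw v (j + i.+1) = \prod_(0 <= i < k) gw v (j.+1 + i).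
    by apply: eq_bigr => t _; rewrite addSnnS.
  ring.
rewrite -!big_distrr /= in e3 *.
rewrite e1 e2 e3.
ring.
Qed.

Definition pre (w : 'I_n -> F) (j : nat) := \prod_(k < n | (k < j)%N) w k.
Definition post (w : 'I_n -> F) (j : nat) := \prod_(k < n | (j < k)%N) w k.

Lemma preE w j : (j <= n)%N -> pre w j = \prod_(0 <= k < j) natv w k.
Proof.
move=> jn; transitivity (\prod_(k < n | (k < j)%N) natv w k).
  by apply: eq_bigr => k _; rewrite natv_ord.
exact: CLp.
Qed.

Lemma postE w j : post w j = \prod_(j.+1 <= k < n) natv w k.
Proof.
transitivity (\prod_(k < n | (j < k)%N) natv w k).
  by apply: eq_bigr => k _; rewrite natv_ord.
exact: CL2.
Qed.

Lemma preS w j : (j < n)%N -> pre w j.+1 = pre w j * natv w j.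
Proof.
move=> jn; rewrite (@preE w j.+1 jn) (@preE w j (ltnW jn)).
by rewrite big_nat_recr.
Qed.

Lemma pre0 w : pre w 0 = 1.
Proof. by rewrite /pre big_pred0. Qed.

Lemma prepost w j : (j < n)%N -> pre w j * natv w j * post w j = \prod_(k < n) w k.
Proof.
move=> jn; rewrite (@preE w j (ltnW jn)) postE.
transitivity (\prod_(0 <= k < n) natv w k); last first.
  by rewrite big_mkord; apply: eq_bigr => k _; rewrite natv_ord.
by rewrite [RHS](@big_cat_nat _ _ _ j.+1) //= (@big_nat_recr _ _ _ j 0).
Qed.

Lemma sigmajE (u v : 'I_n -> F) c j : sigmaj u v c j =
  \sum_(r < n) (pre v r * post u r) + (c - 1) * \sum_(r < n | (r < j)%N) (pre v r * post u r).
Proof.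
rewrite /sigmaj [X in _ = _ + _ * X]big_mkcond mulr_sumr -big_split /=.
by apply: eq_bigr => r _; case: ifP => _; rewrite /pre /post; ring.
Qed.

Lemma sigmajS (u v : 'I_n -> F) c j : (j < n)%N ->
  sigmaj u v c j.+1 = sigmaj u v c j + (c - 1) * (pre v j * post u j).
Proof.
move=> jn; rewrite !sigmajE.
rewrite (@CLs _ (fun r => pre v r * post u r)) // (@CLs _ (fun r => pre v r * post u r)) 1?ltnW //.
rewrite big_nat_recr //=; ring.
Qed.

Lemma kappa0 (u v : 'I_n -> F) c : kappa u v 0 = sigmaj u v c 0.
Proof.
rewrite /kappa /sigmaj; apply: eq_bigr => k _; rewrite ltn0 mul1r.
by congr (_ * _); apply: eq_bigr => t _; rewrite add0n modn_small // natv_ord.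
Qed.

Lemma closed_form (u v : 'I_n -> F) c :
  c * \prod_(k < n) u k = \prod_(k < n) v k ->
  forall j, (j <= n)%N -> kappa u v j * pre v j = sigmaj u v c j * pre u j.
Proof.
move=> hc; elim=> [|j IH] jn; first by rewrite !pre0 (kappa0 u v c).
have jn' : (j < n)%N by [].
have E := IH (ltnW jn').
have K := kapK u v j.
rewrite /gw modn_small // in K.
have S := @sigmajS u v c j jn'.
have F2 := @prepost u j jn'.
rewrite !preS //.
set Pv := pre v j in E *; set Pu := pre u j in E F2 *.
set nv := natv v j in K *; set nu := natv u j in K F2 *.
set k1 := kappa u v j.+1 in K *; set k0 := kappa u v j in K E *.
set s1 := sigmaj u v c j.+1 in S *; set s0 := sigmaj u v c j in S E *.
set Qu := post u j in S F2 *.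
set PU := \prod_(k < n) u k in hc F2 *; set PV := \prod_(k < n) v k in hc K *.
apply/eqP; rewrite -subr_eq0.
have -> : k1 * (Pv * nv) - s1 * (Pu * nu) =
  Pv * (nv * k1 - (nu * k0 + PV - PU)) - Pu * nu * (s1 - (s0 + (c - 1) * (Pv * Qu)))
  + nu * (k0 * Pv - s0 * Pu) - (c - 1) * Pv * (Pu * nu * Qu - PU) - Pv * (c * PU - PV).
  ring.
by rewrite K S E F2 hc !subrr !mulr0 !subr0 addr0.
Qed.

Lemma pre_neq0 (w : 'I_n -> F) j : (forall k, w k != 0) -> pre w j != 0.
Proof. by move=> hw; apply/prodf_neq0 => k _. Qed.

Lemma entry_eqs (u v : 'I_n -> F) c (b : 'I_n) :
  (forall k, u k != 0) -> (forall k, v k != 0) ->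
  c * \prod_(k < n) u k = \prod_(k < n) v k ->
  sigmaj u v c b != 0 -> sigmaj u v c b.+1 != 0 ->
  u b * sigmaj u v c b.+1 / sigmaj u v c b = v b * kappa u v b.+1 / kappa u v b /\
  v b * sigmaj u v c b / sigmaj u v c b.+1 = u b * kappa u v b / kappa u v b.+1.
Proof.
move=> hu hv hc s0 s1.
have E0 := @closed_form u v c hc b (ltnW (ltn_ord b)).
have E1 := @closed_form u v c hc b.+1 (ltn_ord b).
rewrite !preS // !natv_ord in E1.
have pu := @pre_neq0 u b hu; have pv := @pre_neq0 v b hv.
have ub := hu b; have vb := hv b.
have -> : kappa u v b = sigmaj u v c b * pre u b / pre v b.
  by rewrite -E0 mulfK.
have -> : kappa u v b.+1 = sigmaj u v c b.+1 * (pre u b * u b) / (pre v b * v b).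
  by rewrite -E1 mulfK // mulf_neq0.
by split; field; rewrite ?pu ?pv ?ub ?vb ?s0 ?s1.
Qed.

End Aux.

Lemma rowv_ord (F : fieldType) m n (x : 'M[F]_(m, n)) (a : 'I_m) j : rowv x a j = x a j.
Proof. by rewrite /rowv valK. Qed.

Theorem proposition6p1 (R : realType) (m n : nat) (x : 'M[R[i]]_(m, n))
  (i : nat) (hi : (i.+1 < m)%N)
  (hx : forall a b, x a b != 0)
  (* both sides are defined at x: *)
  (hsig : sigma (rowv x i) (rowv x i.+1) != 0)
  (hsigj : forall j : nat, (j <= n)%N ->
     sigmaj (rowv x i) (rowv x i.+1) (eps_i x i / phi_i x i) j != 0)
  (hkap : forall r : nat, (r <= n)%N -> kappa (rowv x i) (rowv x i.+1) r != 0) :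
  s_i i x = R_i i x /\ eps_i x i / phi_i x i = piRow x i.+1 / piRow x i.
Proof.
have im : (i < m)%N by apply: ltnW.
pose i0 : 'I_m := Ordinal im.
pose i1 : 'I_m := Ordinal hi.
have eu : rowv x i = rowv x i0 by [].
have ev : rowv x i.+1 = rowv x i1 by [].
have hu : forall k, rowv x i k != 0 by move=> k; rewrite eu rowv_ord.
have hv : forall k, rowv x i.+1 k != 0 by move=> k; rewrite ev rowv_ord.
have pu : piRow x i != 0 by apply/prodf_neq0 => k _.
have pv : piRow x i.+1 != 0 by apply/prodf_neq0 => k _.
have hc2 : eps_i x i / phi_i x i = piRow x i.+1 / piRow x i.
  by rewrite /eps_i /phi_i; field; rewrite hsig pu.
split; last exact: hc2.
destruct n as [|N]; first by apply/matrixP => a [].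
move: hsigj hkap hsig hc2 hu hv pu pv.
rewrite /s_i /e_i /R_i.
set c := eps_i x i / phi_i x i.
rewrite /piRow.
set u := rowv x i; set v := rowv x i.+1.
move=> hsigj hkap hsig hc2 hu hv pu pv.
have hc : c * \prod_(j < N.+1) u j = \prod_(j < N.+1) v j by rewrite hc2 divfK.
apply/matrixP => a b; rewrite !mxE /=.
have [h1 h2] := @entry_eqs _ N u v c b hu hv hc (hsigj b (ltnW (ltn_ord b))) (hsigj b.+1 (ltn_ord b)).
case: eqP => ha.
  have -> : x a b = u b by rewrite /u -ha rowv_ord.
  exact: h1.
case: eqP => hb //.
have -> : x a b = v b by rewrite /v -hb rowv_ord.
exact: h2.
Qed.
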